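(* Let $D\subset\mathbb N^n$ be a finite set not contained in any coordinate hyperplane of $\mathbb R^n$, $p$ a prime, and $I\subset\{1,\dots,n\}$ with $\#I=k$. Then $\delta_p(D)\le\delta_p(D_I)+n-k$.
   Context: $D_I=\{\mathbf d\in D:d_j=0\text{ for }j\notin I\}$, regarded as a subset of $\mathbb N^I$. For a finite $D'\subset\mathbb N^{n'}$: if $D'$ is contained in a coordinate hyperplane, $\delta_p(D')=\infty$; otherwise $\delta_p(D')=\frac1{p-1}\min_{r\ge1}\frac{s_{D',p}(r)}r$, where $s_{D',p}(r)$ is the minimum of $\sum_{\mathbf d}s_p(u_{\mathbf d})$ over $U=(u_{\mathbf d})\in\{0,\dots,p^r-1\}^{D'}$ with $\sum u_{\mathbf d}\mathbf d\equiv0\pmod{p^r-1}$ and all coordinates of $\sum u_{\mathbf d}\mathbf d$ positive, and $s_p$ is the base-$p$ digit sum (the minimum over $r$ exists). *)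

(* Defs.v *)
From HB Require Import structures.
From mathcomp Require Import all_boot all_order all_algebra.
From mathcomp Require Import all_classical all_reals ereal.
Set Implicit Arguments. Unset Strict Implicit. Unset Printing Implicit Defensive.
Import Order.TTheory GRing.Theory Num.Theory.

(* Vectors of N^n are finite functions 'I_n -> nat; a finite set D of such
   vectors is a duplicate-free sequence. *)
Notation vec n := {ffun 'I_n -> nat}.

(* base-p digit sum s_p(m) (fuel m suffices since m %/ p < m when p >= 2) *)
Fixpoint digsum_aux (fuel p m : nat) : nat :=
  match fuel with
  | 0 => 0
  | f.+1 => if m == 0 then 0 else m %% p + digsum_aux f p (m %/ p)
  end.
Definition digsum (p m : nat) : nat := digsum_aux m.+1 p m.

(* D_I = {d in D : d_j = 0 for j notin I}, viewed inside N^n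
   (its coordinates outside I vanish; N^I is identified with these vectors). *)
Definition restrD n (I : {set 'I_n}) (D : seq (vec n)) : seq (vec n) :=
  seq.filter (fun d : vec n => [forall j : 'I_n, (j \notin I) ==> (d j == 0)]) D.

Definition in_coord_hyperplane n (J : {set 'I_n}) (D : seq (vec n)) : bool :=
  [exists j in J, all (fun d : vec n => d j == 0) D].

Definition admissible n (p r : nat) (J : {set 'I_n}) (D : seq (vec n))
  (u : vec n -> nat) : Prop :=
  (forall d, d \in D -> u d < p ^ r) /\
  (forall j, j \in J ->
     (p ^ r - 1 %| \sum_(d <- D) u d * d j) /\ 0 < \sum_(d <- D) u d * d j).

Section Delta.
Variable R : realType.
Local Open Scope ereal_scope.

(* s_{D,p}(r) : minimum (= infimum of a nonempty set of naturals) *)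
Definition s_Dp n (p : nat) (J : {set 'I_n}) (D : seq (vec n)) (r : nat) : \bar R :=
  ereal_inf [set ((\sum_(d <- D) digsum p (u d))%:R)%:E
            | u in [set u | admissible p r J D u]].

(* delta_p(D) = 1/(p-1) * min_{r>=1} s(r)/r  (min written as inf; the min
   exists), or +oo if D is contained in a coordinate hyperplane *)
Definition delta_p n (p : nat) (J : {set 'I_n}) (D : seq (vec n)) : \bar R :=
  if in_coord_hyperplane J D then +oo
  else (((p - 1)%:R : R)^-1)%:E *
       ereal_inf [set s_Dp p J D r * (((r%:R : R)^-1)%:E) | r in [set r : nat | (0 < r)%N]].
End Delta.

(* Main.v *)
Require Import Defs.
From HB Require Import structures.
From mathcomp Require Import all_boot all_order all_algebra.
From mathcomp Require Import all_classical all_reals ereal.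
From mathcomp Require Import zify.
Import Order.TTheory GRing.Theory Num.Theory.

Lemma digsum_aux_pow p : 1 < p -> forall f r, p ^ r <= f ->
  digsum_aux f p (p ^ r - 1) = r * (p - 1).
Proof.
move=> p1; elim=> [|f IH] [|r] //=.   move=> H; have : 0 < p ^ r.+1 by rewrite expn_gt0 ltnW.
  lia.

move=> H; have H1 : 0 < p ^ r by rewrite expn_gt0 ltnW.
  have E : p ^ r.+1 - 1 = (p ^ r - 1) * p + (p - 1).
    rewrite expnS; nia.
  have -> : (p ^ r.+1 - 1 == 0) = false.
    by apply/negbTE; rewrite expnS; nia.
  rewrite E modnMDl divnMDl ?(ltnW p1) // modn_small ?divn_small; try lia.
  rewrite addn0 IH; first lia.
  rewrite expnS in H; nia.
Qed.

Lemma digsum_pow p r : 1 < p -> digsum p (p ^ r - 1) = r * (p - 1).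
Proof. move=> p1; apply: digsum_aux_pow => //; lia. Qed.

Lemma core n (D : seq (vec n)) p r (I : {set 'I_n}) u :
  1 < p -> 0 < r -> ~~ in_coord_hyperplane [set: 'I_n] D -> uniq D ->
  admissible p r I (restrD I D) u ->
  exists u', admissible p r [set: 'I_n] D u' /\
   \sum_(d <- D) digsum p (u' d) <=
     \sum_(d <- restrD I D) digsum p (u d) + #|~: I| * (r * (p - 1)).
Proof.
move=> p1 r0 nH uD [ub adm].
set P := fun d : vec n => [forall j : 'I_n, (j \notin I) ==> (d j == 0)].
have hasj : forall j : 'I_n, has (fun d : vec n => d j != 0) D.
  move=> j; apply/negP => /negP; rewrite -all_predC => Hall.
  move/negP: nH; apply; apply/existsP; exists j; rewrite inE /=.
  by apply: sub_all Hall => d /= /negPn.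
pose c (j : 'I_n) := nth [ffun=> 0%N] D (find (fun d : vec n => d j != 0) D).
have cD : forall j, c j \in D by move=> j; apply: mem_nth; rewrite -has_find.
have cj : forall j, c j j != 0%N by move=> j; apply: (@nth_find _ _ (fun d : vec n => d j != 0)).
have cP : forall j, j \notin I -> ~~ P (c j).
  move=> j jI; apply/negP => /forallP /(_ j); rewrite jI /= => /eqP.
  by move/eqP: (cj j).
pose S := [seq c j | j <- enum (~: I)].
have pr0 : (0 < p ^ r)%N by rewrite expn_gt0 ltnW.
have pr1 : (0 < p ^ r - 1)%N.
  have : (p ^ 1 <= p ^ r)%N by rewrite leq_exp2l.
  rewrite expn1; lia.
exists (fun d => if P d then u d else if d \in S then p ^ r - 1 else 0%N).
split; first split.
- move=> d dD; case: ifP => Pd; first by apply: ub; rewrite mem_filter; apply/andP; split.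
  by case: ifP => _; lia.
- move=> j _.
  rewrite (bigID P) /=.
  have -> : \sum_(i <- D | P i) (if P i then u i else if i \in S then p ^ r - 1 else 0%N) * i j
          = \sum_(d <- restrD I D) u d * d j.
    by rewrite /restrD big_filter; apply: eq_bigr => i ->.
  have dB : (p ^ r - 1 %| \sum_(i <- D | ~~ P i) (if P i then u i else if i \in S then p ^ r - 1 else 0%N) * i j).
    apply: dvdn_sum => i /negbTE ->; case: ifP => _; last by rewrite mul0n dvdn0.
    exact: dvdn_mulr.
  case: (boolP (j \in I)) => jI.
    have [a1 a2] := adm j jI.
    by split; [apply: dvdn_add | apply: ltn_addr].
  have -> : \sum_(d <- restrD I D) u d * d j = 0%N.
    apply: big1_seq => d /andP [_]; rewrite mem_filter => /andP [/forallP /(_ j)].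
    by rewrite jI /= => /eqP ->; rewrite muln0.
  rewrite add0n; split => //.
  rewrite (big_rem (c j)) // (negbTE (cP j jI)) /=.
  have -> : c j \in S by apply: map_f; rewrite mem_enum inE.
  apply: ltn_addr; by rewrite muln_gt0 pr1 /= lt0n.
- rewrite (bigID P) /=.
  have -> : \sum_(i <- D | P i) digsum p (if P i then u i else if i \in S then p ^ r - 1 else 0%N)
          = \sum_(d <- restrD I D) digsum p (u d).
    by rewrite /restrD big_filter; apply: eq_bigr => i ->.
  rewrite leq_add2l.
  apply: (@leq_trans (\sum_(i <- D | i \in S) (r * (p - 1)))).
    rewrite big_mkcond [X in (_ <= X)%N]big_mkcond /=; apply: leq_sum => i _.
    case: (P i) => //=; case: (i \in S) => //=.
    by rewrite digsum_pow.
  rewrite big_const_seq iter_addn_0 mulnC leq_mul2r; apply/orP; right.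
  rewrite -size_filter.
  have -> : #|~: I| = size S by rewrite size_map -cardE.
  apply: uniq_leq_size; first exact: filter_uniq.
  by move=> x; rewrite mem_filter => /andP [].
Qed.

Section Main.
Local Open Scope ereal_scope.

Lemma sD_le (R : realType) n (D : seq (vec n)) p r (I : {set 'I_n}) :
  (1 < p)%N -> (0 < r)%N -> ~~ in_coord_hyperplane [set: 'I_n] D -> uniq D ->
  s_Dp R p [set: 'I_n] D r <=
  s_Dp R p I (restrD I D) r + ((#|~: I| * (r * (p - 1)))%:R : R)%:E.
Proof.
move=> p1 r0 nH uD.
rewrite -leeBlDr //; apply/ereal_infP => _ [u adm <-].
have [u' [adm' le']] := core _ _ _ _ _ _ p1 r0 nH uD adm.
rewrite leeBlDr //.
apply: le_trans (ereal_inf_lbound _) _; first by exists u'.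
by rewrite -EFinD lee_fin -natrD ler_nat.
Qed.

End Main.
Theorem lemma2p6 (R : realType) (n : nat) (D : seq (vec n)) (p : nat)
  (I : {set 'I_n}) (k : nat) :
  uniq D ->
  ~~ in_coord_hyperplane [set: 'I_n] D ->
  prime p ->
  #|I| = k ->
  (delta_p R p [set: 'I_n] D <= delta_p R p I (restrD I D) + ((n - k)%:R : R)%:E)%E.
Proof.
move=> uD nH pp cI.
have p1 : (1 < p)%N by apply: prime_gt1.
have cC : #|~: I| = (n - k)%N by have := cardsC I; rewrite card_ord cI; lia.
rewrite /delta_p (negbTE nH).
case: ifP => H; first by rewrite addye // leey.
set K : R := (((n - k) * (p - 1))%N%:R)%R.
set c : R := (((p - 1)%N%:R)^-1)%R.
have c0 : (0 <= c)%R by rewrite invr_ge0 ler0n.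
have pn0 : (((p - 1)%N%:R : R) != 0)%R by rewrite pnatr_eq0; lia.
have cK : (c * K = (n - k)%N%:R)%R by rewrite /c /K natrM mulrC mulfK.
set infA := ereal_inf _.
set infB := ereal_inf _.
have -> : (c%:E * infB + ((n - k)%:R : R)%:E = c%:E * (infB + K%:E))%E.
  by rewrite muleDr ?fin_num_adde_defl // -EFinM cK.
apply: lee_wpmul2l; first by rewrite lee_fin.
rewrite -leeBlDr //; apply/ereal_infP => _ [r r0 <-].
rewrite leeBlDr //.
apply: le_trans (ereal_inf_lbound _) _; first by exists r.
have rn0 : ((r%:R : R) != 0)%R by rewrite pnatr_eq0 -lt0n.
have -> : (K%:E = ((((r * (n - k) * (p - 1))%N%:R : R)%:E) * ((r%:R : R)^-1)%:E))%E.
  by rewrite -EFinM /K; congr EFin; rewrite -mulnA [in RHS]natrM mulrC mulrA mulVf // mul1r.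
rewrite -muleDl ?fin_num_adde_defl //.
apply: lee_wpmul2r; first by rewrite lee_fin invr_ge0 ler0n.
have e : (#|~: I| * (r * (p - 1)) = r * (n - k) * (p - 1))%N by rewrite cC mulnCA mulnA.
rewrite -e. have r0' : (0 < r)%N := r0. exact: (sD_le R _ _ _ _ _ p1 r0' nH uD).
Qed.
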